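(* For every convex quadrilateral $T\subset\mathbb{R}^2$ whose four vertices lie on the four different coordinate semiaxes (one vertex on each of the positive $x$-semiaxis, negative $x$-semiaxis, positive $y$-semiaxis, negative $y$-semiaxis, all distinct from the origin), one has $P_{\gamma_2}(T)<\sqrt{2/\pi}$. Moreover the constant is sharp: for the rhombi $T_n$ with vertices $(n,0),(0,1/n),(-n,0),(0,-1/n)$ one has $\lim_{n\to\infty}P_{\gamma_2}(T_n)=\sqrt{2/\pi}$.
   Context: For a convex set $\Omega\subset\mathbb{R}^2$, its Gaussian perimeter is $P_{\gamma_2}(\Omega)=\frac{1}{2\pi}\int_{\partial\Omega}\exp\left(-\frac{|\mathbf{x}|^2}{2}\right)d\mathcal{H}^1(\mathbf{x})$, where $\mathcal{H}^1$ is the one-dimensional Hausdorff measure. *)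

(* Defs.v *)
From Stdlib Require Import Reals.
From Coquelicot Require Import Coquelicot.
Open Scope R_scope.

Definition pt := (R * R)%type.

Definition nrm2 (p : pt) : R := fst p ^ 2 + snd p ^ 2.
Definition seglen (p q : pt) : R := sqrt ((fst q - fst p) ^ 2 + (snd q - snd p) ^ 2).

Definition gweight (x : pt) : R := exp (- nrm2 x / 2).

(* Integral of the Gaussian weight against H^1 on the segment [p,q],
   via the arclength parametrisation t |-> p + t (q - p), t in [0,1]. *)
Definition seg_gauss (p q : pt) : R :=
  seglen p q *
  RInt (fun t => gweight (fst p + t * (fst q - fst p), snd p + t * (snd q - snd p))) 0 1.

(* Gaussian perimeter of the convex polygon with vertices listed cyclically:
   (1/(2 pi)) * integral of exp(-|x|^2/2) over its boundary. *)
Definition gauss_perim_quad (v1 v2 v3 v4 : pt) : R :=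
  / (2 * PI) * (seg_gauss v1 v2 + seg_gauss v2 v3 + seg_gauss v3 v4 + seg_gauss v4 v1).

Definition semiaxis_quad (a b c d : R) : R :=
  gauss_perim_quad (a, 0) (0, b) (- c, 0) (0, - d).

(* Main.v *)
Require Import Defs.
From Stdlib Require Import Reals Lra Lia Psatz.
From Coquelicot Require Import Coquelicot.
Open Scope R_scope.

Ltac rring := match goal with |- @eq _ ?a ?b => change (@eq R a b) end; ring.

Lemma exp_mono x y : x <= y -> exp x <= exp y.
Proof. intros [H|H]. left; now apply exp_increasing. subst; lra. Qed.

Definition g (t : R) : R := exp (- (t ^ 2) / 2).
Definition Phi (x : R) : R := RInt g 0 x.

Lemma g_derive x : is_derive g x (- x * g x).
Proof. unfold g. auto_derive; auto. replace (- (x*(x*1)) * /2) with (- x^2/2) by field. field. Qed.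

Lemma g_cont x : continuous g x.
Proof. apply (ex_derive_continuous g x). eexists. apply g_derive. Qed.

Lemma ex_RInt_g a b : ex_RInt g a b.
Proof. apply (@ex_RInt_continuous R_CompleteNormedModule). intros; apply g_cont. Qed.

Lemma cont_of_deriv (f : R -> R) x : ex_derive f x -> continuous f x.
Proof. intros H. apply (ex_derive_continuous f x H). Qed.

Lemma exRI_of_deriv (f : R -> R) a b : (forall x, ex_derive f x) -> ex_RInt f a b.
Proof. intros H. apply (@ex_RInt_continuous R_CompleteNormedModule). intros; now apply cont_of_deriv. Qed.

Lemma Phi_scale x : x * RInt (fun s => g (x * s)) 0 1 = Phi x.
Proof.
  unfold Phi.
  assert (E: ex_RInt (fun y => g (x*y+0)) 0 1).
  { apply exRI_of_deriv. intros; unfold g; auto_derive; auto. }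
  transitivity (RInt (fun y => scal x (g (x*y+0))) 0 1).
  - rewrite (RInt_scal (V:=R_CompleteNormedModule)) by exact E. unfold scal; simpl; unfold mult; simpl.
    f_equal. apply RInt_ext. intros. now rewrite Rplus_0_r.
  - rewrite (RInt_comp_lin (V:=R_CompleteNormedModule)) by apply ex_RInt_g. f_equal; ring.
Qed.

Lemma RInt_cmul (c : R) (f : R -> R) a b : ex_RInt f a b ->
  RInt (fun s => c * f s) a b = c * RInt f a b.
Proof.
  intros E. rewrite <- (RInt_scal (V:=R_CompleteNormedModule)) by exact E.
  reflexivity.
Qed.

Definition kf (x s : R) : R := exp (- (x ^ 2 * (1 + s ^ 2)) / 2) / (1 + s ^ 2).
Definition K (x : R) : R := RInt (fun s => kf x s) 0 1.
Definition dkf (x s : R) : R := - x * exp (- (x ^ 2 * (1 + s ^ 2)) / 2).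

Lemma pos1s s : 0 < 1 + s ^ 2.
Proof. nra. Qed.

Lemma kf_deriv x s : is_derive (fun z => kf z s) x (dkf x s).
Proof.
  unfold kf, dkf. auto_derive.
  - pose proof (pos1s s); lra.
  - pose proof (pos1s s).
    replace (- (x * (x * 1) * (1 + s * (s * 1))) * / 2) with (- (x ^ 2 * (1 + s ^ 2)) / 2) by field.
    field. lra.
Qed.

Lemma Derive_kf x s : Derive (fun z => kf z s) x = dkf x s.
Proof. apply is_derive_unique, kf_deriv. Qed.

Lemma dkf_cont x t : continuity_2d_pt (fun u v => Derive (fun z => kf z v) u) x t.
Proof.
  apply continuity_2d_pt_ext with (f := dkf).
  { intros; now rewrite Derive_kf. }
  unfold dkf. apply continuity_2d_pt_mult.
  - apply continuity_2d_pt_opp, continuity_2d_pt_id1.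
  - apply continuity_1d_2d_pt_comp.
    + apply derivable_continuous_pt, derivable_pt_exp.
    + apply continuity_2d_pt_mult.
      * apply continuity_2d_pt_opp, continuity_2d_pt_mult.
        -- apply continuity_2d_pt_ext with (f := fun u v => u * u).
           { intros; ring. }
           apply continuity_2d_pt_mult; apply continuity_2d_pt_id1.
        -- apply continuity_2d_pt_plus. apply continuity_2d_pt_const.
           apply continuity_2d_pt_ext with (f := fun u v => v * v).
           { intros; ring. }
           apply continuity_2d_pt_mult; apply continuity_2d_pt_id2.
      * apply continuity_2d_pt_const.
Qed.

Lemma ex_RInt_kf x a b : ex_RInt (fun s => kf x s) a b.
Proof.
  apply exRI_of_deriv. intros s. unfold kf. auto_derive. pose proof (pos1s s); lra.
Qed.

Lemma K_deriv x : is_derive K x (- g x * Phi x).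
Proof.
  unfold K.
  assert (H := is_derive_RInt_param kf 0 1 x).
  replace (- g x * Phi x) with (RInt (fun t => Derive (fun u => kf u t) x) 0 1).
  - apply H.
    + apply filter_forall. intros y t _. eexists. apply kf_deriv.
    + intros. apply dkf_cont.
    + apply filter_forall. intros y. apply ex_RInt_kf.
  - rewrite <- Phi_scale.
    transitivity (RInt (fun s => (- x * g x) * g (x * s)) 0 1).
    + apply RInt_ext. intros s _. rewrite Derive_kf. unfold dkf, g.
      rewrite Rmult_assoc, <- exp_plus. f_equal. f_equal. field.
    + rewrite RInt_cmul. enough (E: forall y r:R, -y*g y * r = -g y*(y*r)) by apply E. intros; ring.
      apply exRI_of_deriv. intros; unfold g; auto_derive; auto.
Qed.

Lemma Phi_deriv x : is_derive Phi x (g x).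
Proof.
  unfold Phi. apply (is_derive_RInt (V:=R_CompleteNormedModule) g (RInt g 0) 0).
  - apply filter_forall. intros. apply RInt_correct, ex_RInt_g.
  - apply g_cont.
Qed.

Definition hh (x : R) : R := Phi x ^ 2 + 2 * K x.

Lemma hh_deriv x : is_derive hh x 0.
Proof.
  unfold hh.
  assert (H1 := is_derive_pow Phi 2 x _ (Phi_deriv x)).
  assert (H2 := is_derive_scal K x 2 _ (K_deriv x)).
  assert (H := is_derive_plus _ _ x _ _ H1 H2).
  replace 0 with (plus (INR 2 * g x * Phi x ^ Init.Nat.pred 2) (2 * (- g x * Phi x))).
  - exact H.
  - unfold plus; simpl. ring.
Qed.

Lemma hh_const x : hh x = hh 0.
Proof.
  destruct (MVT_gen hh 0 x (fun _ => 0)) as [c [_ Hc]].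
  - intros; apply hh_deriv.
  - intros y _. apply derivable_continuous_pt. exists 0. apply is_derive_Reals, hh_deriv.
  - lra.
Qed.

Lemma K0 : K 0 = PI / 4.
Proof.
  unfold K.
  transitivity (RInt (fun s => / (1 + s ^ 2)) 0 1).
  - apply RInt_ext. intros s _. unfold kf.
    replace (- (0 ^ 2 * (1 + s ^ 2)) / 2) with 0 by field. rewrite exp_0. unfold Rdiv. rring.
  - rewrite <- atan_1.
    apply is_RInt_unique.
    replace (atan 1) with (minus (atan 1) (atan 0)) by (rewrite atan_0; unfold minus, plus, opp; simpl; ring).
    apply (is_RInt_derive (V:=R_CompleteNormedModule)).
    + intros. apply is_derive_Reals, derivable_pt_lim_atan.
    + intros. apply cont_of_deriv. auto_derive. pose proof (pos1s x); lra.
Qed.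

Lemma Phi0 : Phi 0 = 0.
Proof. unfold Phi. apply (RInt_point (V:=R_CompleteNormedModule)). Qed.

Lemma Phi_sq x : Phi x ^ 2 = PI / 2 - 2 * K x.
Proof.
  assert (H := hh_const x). unfold hh in H. rewrite Phi0, K0 in H. lra.
Qed.

Lemma K_pos x : 0 < K x.
Proof.
  unfold K.
  apply Rle_lt_trans with (RInt (fun _ => 0) 0 1).
  { right. rewrite RInt_const. unfold scal; simpl; unfold mult; simpl. rring. }
  apply RInt_lt. lra.
  - intros. apply cont_of_deriv. unfold kf. auto_derive. pose proof (pos1s x0); lra.
  - intros. apply continuous_const.
  - intros. unfold kf. apply Rdiv_lt_0_compat. apply exp_pos. apply pos1s.
Qed.

Lemma K_le x : K x <= g x.
Proof.
  unfold K.
  replace (g x) with (RInt (fun _ => g x) 0 1).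
  2:{ rewrite RInt_const. unfold scal; simpl; unfold mult; simpl. rring. }
  apply RInt_le. lra. apply ex_RInt_kf. apply ex_RInt_const.
  intros s Hs. unfold kf, g.
  pose proof (pos1s s).
  apply Rle_trans with (exp (- (x ^ 2 * (1 + s ^ 2)) / 2)).
  - unfold Rdiv at 1. rewrite <- (Rmult_1_r (exp _)) at 2.
    apply Rmult_le_compat_l. left; apply exp_pos.
    rewrite <- Rinv_1. apply Rinv_le_contravar. lra. nra.
  - apply exp_mono. assert (0 <= x^2 * s^2) by nra. lra.
Qed.

Lemma Phi_nonneg x : 0 <= x -> 0 <= Phi x.
Proof.
  intros Hx. unfold Phi. apply RInt_ge_0. exact Hx. apply ex_RInt_g.
  intros. left. apply exp_pos.
Qed.

Lemma Phi_lt x : 0 <= x -> Phi x < sqrt (PI / 2).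
Proof.
  intros Hx. rewrite <- (sqrt_pow2 (Phi x)) by now apply Phi_nonneg.
  apply sqrt_lt_1. apply pow2_ge_0. left. apply Rdiv_lt_0_compat. apply PI_RGT_0. lra.
  rewrite Phi_sq. pose proof (K_pos x). lra.
Qed.

Lemma Phi_lb x : 0 <= x -> PI / 2 - 2 * g x <= Phi x ^ 2.
Proof. intros. rewrite Phi_sq. pose proof (K_le x). lra. Qed.

Lemma reflect01 (f : R -> R) : (forall x, ex_derive f x) ->
  RInt (fun t => f (1 - t)) 0 1 = RInt f 0 1.
Proof.
  intros Hf.
  assert (E1 : ex_RInt (fun y => f (-1 * y + 1)) 0 1).
  { apply exRI_of_deriv. intros y. apply ex_derive_comp. apply Hf. auto_derive; auto. }
  transitivity (RInt (fun y => (-1) * scal (-1) (f (-1 * y + 1))) 0 1).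
  - apply RInt_ext. intros. unfold scal; simpl; unfold mult; simpl.
    replace (-1 * x + 1) with (1 - x) by ring. rring.
  - rewrite RInt_cmul.
    + rewrite (RInt_comp_lin (V:=R_CompleteNormedModule)).
      * replace (-1 * 0 + 1) with 1 by ring. replace (-1 * 1 + 1) with 0 by ring.
        rewrite <- (opp_RInt_swap (V:=R_CompleteNormedModule)).
        -- unfold opp; simpl. rring.
        -- apply exRI_of_deriv; exact Hf.
      * apply exRI_of_deriv; exact Hf.
    + apply (ex_RInt_ext (fun y => scal (-1) (f (-1 * y + 1)))). { intros; reflexivity. }
      apply (ex_RInt_scal (V:=R_CompleteNormedModule)). exact E1.
Qed.

Definition qf (X Y t : R) : R := exp (- (X * (1 - t) ^ 2 + Y * t ^ 2) / 2).
Definition J (X Y : R) : R := RInt (qf X Y) 0 1.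

Lemma qf_der X Y t : ex_derive (qf X Y) t.
Proof. unfold qf. auto_derive. auto. Qed.

Lemma J_sym X Y : J X Y = J Y X.
Proof.
  unfold J. rewrite <- (reflect01 (qf X Y)) by apply qf_der.
  apply RInt_ext. intros. unfold qf. f_equal. f_equal. ring.
Qed.

Lemma pointwise X Y u w : 0 <= X -> 0 <= Y -> 0 <= u -> 0 <= w ->
  exp (- (X * w ^ 2 + Y * u ^ 2) / 2) + exp (- (X * u ^ 2 + Y * w ^ 2) / 2)
  <= exp (- ((X + Y) * u ^ 2) / 2) + exp (- ((X + Y) * w ^ 2) / 2).
Proof.
  intros HX HY Hu Hw.
  set (al := exp (- (X * u ^ 2) / 2)). set (be := exp (- (X * w ^ 2) / 2)).
  set (ga := exp (- (Y * u ^ 2) / 2)). set (de := exp (- (Y * w ^ 2) / 2)).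
  assert (E1 : exp (- (X * w ^ 2 + Y * u ^ 2) / 2) = be * ga).
  { unfold be, ga. rewrite <- exp_plus. f_equal. field. }
  assert (E2 : exp (- (X * u ^ 2 + Y * w ^ 2) / 2) = al * de).
  { unfold al, de. rewrite <- exp_plus. f_equal. field. }
  assert (E3 : exp (- ((X + Y) * u ^ 2) / 2) = al * ga).
  { unfold al, ga. rewrite <- exp_plus. f_equal. field. }
  assert (E4 : exp (- ((X + Y) * w ^ 2) / 2) = be * de).
  { unfold be, de. rewrite <- exp_plus. f_equal. field. }
  rewrite E1, E2, E3, E4.
  assert (0 <= (al - be) * (ga - de)).
  { destruct (Rle_lt_dec (u ^ 2) (w ^ 2)) as [H|H].
    - assert (be <= al). { unfold al, be. apply exp_mono. nra. }
      assert (de <= ga). { unfold de, ga. apply exp_mono. nra. }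
      nra.
    - assert (al <= be). { unfold al, be. apply exp_mono. nra. }
      assert (ga <= de). { unfold de, ga. apply exp_mono. nra. }
      nra. }
  nra.
Qed.

Definition Gf (S t : R) : R := exp (- (S * t ^ 2) / 2).

Lemma Gf_der S t : ex_derive (Gf S) t.
Proof. unfold Gf. auto_derive. auto. Qed.

Lemma J_le X Y : 0 <= X -> 0 <= Y -> J X Y <= RInt (Gf (X + Y)) 0 1.
Proof.
  intros HX HY.
  assert (A : 2 * J X Y = RInt (fun t => qf X Y t + qf X Y (1 - t)) 0 1).
  { unfold J. rewrite (RInt_plus (V:=R_CompleteNormedModule) (qf X Y) (fun t => qf X Y (1 - t))).
    - unfold plus; simpl. rewrite reflect01 by apply qf_der. ring.
    - apply exRI_of_deriv, qf_der.
    - apply exRI_of_deriv. intros. apply ex_derive_comp. apply qf_der. auto_derive; auto. }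
  assert (B : 2 * RInt (Gf (X + Y)) 0 1 = RInt (fun t => Gf (X + Y) t + Gf (X + Y) (1 - t)) 0 1).
  { rewrite (RInt_plus (V:=R_CompleteNormedModule) (Gf (X + Y)) (fun t => Gf (X + Y) (1 - t))).
    - unfold plus; simpl. rewrite reflect01 by apply Gf_der. ring.
    - apply exRI_of_deriv, Gf_der.
    - apply exRI_of_deriv. intros. apply ex_derive_comp. apply Gf_der. auto_derive; auto. }
  cut (2 * J X Y <= 2 * RInt (Gf (X + Y)) 0 1). lra.
  rewrite A, B. apply RInt_le. lra.
  - apply exRI_of_deriv. intros. apply (ex_derive_plus (qf X Y) (fun t => qf X Y (1 - t))). apply qf_der.
    apply ex_derive_comp. apply qf_der. auto_derive; auto.
  - apply exRI_of_deriv. intros. apply (ex_derive_plus (Gf (X + Y)) (fun t => Gf (X + Y) (1 - t))). apply Gf_der.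
    apply ex_derive_comp. apply Gf_der. auto_derive; auto.
  - intros t Ht. unfold qf, Gf.
    replace (1 - (1 - t)) with t by ring.
    apply pointwise; lra.
Qed.

Lemma Gf_Phi S : 0 <= S -> sqrt S * RInt (Gf S) 0 1 = Phi (sqrt S).
Proof.
  intros HS. rewrite <- Phi_scale. f_equal. apply RInt_ext. intros. unfold Gf, g.
  rewrite Rpow_mult_distr, pow2_sqrt by exact HS. reflexivity.
Qed.

Lemma seg_upper X Y : 0 <= X -> 0 <= Y -> sqrt (X + Y) * J X Y < sqrt (PI / 2).
Proof.
  intros HX HY.
  apply Rle_lt_trans with (sqrt (X + Y) * RInt (Gf (X + Y)) 0 1).
  - apply Rmult_le_compat_l. apply sqrt_pos. apply J_le; auto.
  - rewrite Gf_Phi by lra. apply Phi_lt, sqrt_pos.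
Qed.

Lemma seg_lower u v : 0 <= u -> 0 <= v -> g v * Phi u <= sqrt (u ^ 2 + v ^ 2) * J (u ^ 2) (v ^ 2).
Proof.
  intros Hu Hv.
  assert (L1 : g v * RInt (Gf (u ^ 2)) 0 1 <= J (u ^ 2) (v ^ 2)).
  { unfold J. rewrite <- RInt_cmul by (apply exRI_of_deriv, Gf_der).
    rewrite <- (reflect01 (qf (u ^ 2) (v ^ 2))) by apply qf_der.
    apply RInt_le. lra.
    - apply exRI_of_deriv. intros. apply ex_derive_mult. apply ex_derive_const. apply Gf_der.
    - apply exRI_of_deriv. intros. apply ex_derive_comp. apply qf_der. auto_derive; auto.
    - intros t Ht. unfold g, Gf, qf. rewrite <- exp_plus. apply exp_mono.
      replace (1 - (1 - t)) with t by ring. nra. }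
  rewrite <- (sqrt_pow2 u) at 1 by exact Hu. rewrite <- Gf_Phi by nra.
  assert (0 <= RInt (Gf (u ^ 2)) 0 1).
  { apply RInt_ge_0. lra. apply exRI_of_deriv, Gf_der. intros. left; apply exp_pos. }
  assert (sqrt (u ^ 2) <= sqrt (u ^ 2 + v ^ 2)).
  { apply sqrt_le_1_alt. nra. }
  assert (0 < g v) by apply exp_pos.
  pose proof (sqrt_pos (u ^ 2)).
  revert L1 H H0 H1 H2. generalize (RInt (Gf (u ^ 2)) 0 1) (J (u ^ 2) (v ^ 2))
    (sqrt (u ^ 2)) (sqrt (u ^ 2 + v ^ 2)) (g v). intros r j s1 s2 gg. intros.
  apply Rle_trans with (s1 * j).
  - replace (gg * (s1 * r)) with (s1 * (gg * r)) by ring. apply Rmult_le_compat_l; lra.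
  - apply Rmult_le_compat_r; [|lra]. assert (0 <= gg * r) by (apply Rmult_le_pos; lra). lra.
Qed.

Lemma seg_eq p q X Y :
  (forall t, nrm2 (fst p + t * (fst q - fst p), snd p + t * (snd q - snd p)) = X * (1 - t) ^ 2 + Y * t ^ 2) ->
  (fst q - fst p) ^ 2 + (snd q - snd p) ^ 2 = X + Y ->
  seg_gauss p q = sqrt (X + Y) * J X Y.
Proof.
  intros H1 H2. unfold seg_gauss, seglen. rewrite H2. f_equal.
  apply RInt_ext. intros t _. unfold gweight, qf. rewrite H1. reflexivity.
Qed.

Lemma quad_eq a b c d : semiaxis_quad a b c d =
  / (2 * PI) * (sqrt (a ^ 2 + b ^ 2) * J (a ^ 2) (b ^ 2) + sqrt (b ^ 2 + c ^ 2) * J (b ^ 2) (c ^ 2)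
    + sqrt (c ^ 2 + d ^ 2) * J (c ^ 2) (d ^ 2) + sqrt (d ^ 2 + a ^ 2) * J (d ^ 2) (a ^ 2)).
Proof.
  unfold semiaxis_quad, gauss_perim_quad.
  rewrite (seg_eq (a, 0) (0, b) (a ^ 2) (b ^ 2)) by (intros; unfold nrm2; simpl; ring).
  rewrite (seg_eq (0, b) (- c, 0) (b ^ 2) (c ^ 2)) by (intros; unfold nrm2; simpl; ring).
  rewrite (seg_eq (- c, 0) (0, - d) (c ^ 2) (d ^ 2)) by (intros; unfold nrm2; simpl; ring).
  rewrite (seg_eq (0, - d) (a, 0) (d ^ 2) (a ^ 2)) by (intros; unfold nrm2; simpl; ring).
  reflexivity.
Qed.

Lemma const_id : / (2 * PI) * (4 * sqrt (PI / 2)) = sqrt (2 / PI).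
Proof.
  pose proof PI_RGT_0.
  replace (2 / PI) with (PI / 2 * (2 / PI) ^ 2) by (field; lra).
  rewrite sqrt_mult_alt by lra. rewrite sqrt_pow2.
  - field. lra.
  - left. apply Rdiv_lt_0_compat; lra.
Qed.

Lemma part1 a b c d : 0 < a -> 0 < b -> 0 < c -> 0 < d ->
  semiaxis_quad a b c d < sqrt (2 / PI).
Proof.
  intros. rewrite quad_eq, <- const_id.
  pose proof PI_RGT_0.
  apply Rmult_lt_compat_l. apply Rinv_0_lt_compat; lra.
  pose proof (seg_upper (a ^ 2) (b ^ 2)).
  pose proof (seg_upper (b ^ 2) (c ^ 2)).
  pose proof (seg_upper (c ^ 2) (d ^ 2)).
  pose proof (seg_upper (d ^ 2) (a ^ 2)).
  assert (0 <= a ^ 2) by nra. assert (0 <= b ^ 2) by nra.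
  assert (0 <= c ^ 2) by nra. assert (0 <= d ^ 2) by nra.
  specialize (H4 H8 H9). specialize (H5 H9 H10). specialize (H6 H10 H11). specialize (H7 H11 H8).
  lra.
Qed.

Lemma g_le_inv x : 0 < x -> g x <= / x.
Proof.
  intros Hx. unfold g. replace (- x ^ 2 / 2) with (- (x ^ 2 / 2)) by field.
  rewrite exp_Ropp. apply Rinv_le_contravar. exact Hx.
  pose proof (exp_ineq1_le (x ^ 2 / 2)). nra.
Qed.

Lemma g_cont_pt x : continuity_pt g x.
Proof. apply derivable_continuous_pt. exists (- x * g x). apply is_derive_Reals, g_derive. Qed.

Lemma lim_inv : is_lim_seq (fun n => / INR n) 0.
Proof.
  replace (Finite 0) with (Rbar_inv p_infty) by reflexivity.
  apply is_lim_seq_inv. apply is_lim_seq_INR. discriminate.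
Qed.

Lemma lim_g_INR : is_lim_seq (fun n => g (INR n)) 0.
Proof.
  apply is_lim_seq_le_le_loc with (u := fun _ => 0) (w := fun n => / INR n).
  - exists 1%nat. intros n Hn. split.
    + left; apply exp_pos.
    + apply g_le_inv. apply lt_0_INR. lia.
  - apply is_lim_seq_const.
  - apply lim_inv.
Qed.

Lemma lim_Phi : is_lim_seq (fun n => Phi (INR n)) (sqrt (PI / 2)).
Proof.
  pose proof PI_RGT_0.
  apply is_lim_seq_le_le with (u := fun n => sqrt (PI / 2 - 2 * g (INR n))) (w := fun _ => sqrt (PI / 2)).
  - intros n. pose proof (pos_INR n). split.
    + rewrite <- (sqrt_pow2 (Phi (INR n))) by now apply Phi_nonneg.
      apply sqrt_le_1_alt. now apply Phi_lb.
    + left. now apply Phi_lt.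
  - replace (Finite (sqrt (PI / 2))) with (Finite (sqrt (PI / 2 - 2 * 0))) by (f_equal; f_equal; ring).
    apply (is_lim_seq_continuous sqrt (fun n => PI / 2 - 2 * g (INR n))).
    + apply sqrt_continuity_pt. lra.
    + apply is_lim_seq_minus'. apply is_lim_seq_const.
      apply is_lim_seq_mult'. apply is_lim_seq_const. apply lim_g_INR.
  - apply is_lim_seq_const.
Qed.

Lemma lim_g_inv : is_lim_seq (fun n => g (/ INR n)) 1.
Proof.
  replace 1 with (g 0) by (unfold g; replace (- 0 ^ 2 / 2) with 0 by field; apply exp_0).
  apply (is_lim_seq_continuous g (fun n => / INR n)). apply g_cont_pt. apply lim_inv.
Qed.

Lemma part2 : is_lim_seq (fun n : nat => semiaxis_quad (INR n) (/ INR n) (INR n) (/ INR n))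
             (sqrt (2 / PI)).
Proof.
  pose proof PI_RGT_0.
  apply is_lim_seq_le_le_loc with
    (u := fun n => / (2 * PI) * (4 * (g (/ INR n) * Phi (INR n))))
    (w := fun _ => sqrt (2 / PI)).
  - exists 1%nat. intros n Hn.
    assert (Hx : 0 < INR n) by (apply lt_0_INR; lia).
    assert (Hy : 0 < / INR n) by (apply Rinv_0_lt_compat; lra).
    split.
    + rewrite quad_eq. apply Rmult_le_compat_l. left; apply Rinv_0_lt_compat; lra.
      set (y := / INR n) in *. set (x := INR n) in *.
      pose proof (seg_lower x y (Rlt_le _ _ Hx) (Rlt_le _ _ Hy)).
      rewrite (J_sym (y ^ 2) (x ^ 2)), (Rplus_comm (y ^ 2) (x ^ 2)). lra.
    + left. apply part1; auto.
  - replace (sqrt (2 / PI)) with (/ (2 * PI) * (4 * (1 * sqrt (PI / 2)))).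
    + apply is_lim_seq_mult'. apply is_lim_seq_const.
      apply is_lim_seq_mult'. apply is_lim_seq_const.
      apply is_lim_seq_mult'. apply lim_g_inv. apply lim_Phi.
    + rewrite Rmult_1_l. apply const_id.
  - apply is_lim_seq_const.
Qed.

Theorem theorem1p2 :
  (forall a b c d : R, 0 < a -> 0 < b -> 0 < c -> 0 < d ->
     semiaxis_quad a b c d < sqrt (2 / PI)) /\
  is_lim_seq (fun n : nat => semiaxis_quad (INR n) (/ INR n) (INR n) (/ INR n))
             (sqrt (2 / PI)).
Proof. split. exact part1. exact part2. Qed.
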